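(* Let $\mathcal A$ be a Banach algebra such that the ultrapower $(\mathcal A)_{\mathcal U}$ is simple for some non-principal ultrafilter $\mathcal U$ on $\mathbb N$. Then for every Banach algebra $\mathcal B$, every non-zero continuous algebra homomorphism $\psi:\mathcal A\to\mathcal B$ is bounded below, i.e. there is $c>0$ with $\|\psi(a)\|\geqslant c\|a\|$ for all $a\in\mathcal A$.
   Context: For an ultrafilter $\mathcal U$ on $\mathbb N$, the ultrapower is $(\mathcal A)_{\mathcal U}=\ell^\infty(\mathcal A)/c_{\mathcal U}(\mathcal A)$, where $\ell^\infty(\mathcal A)$ is the Banach algebra of bounded sequences in $\mathcal A$ with pointwise operations and sup norm, and $c_{\mathcal U}(\mathcal A)$ is the closed ideal of sequences $(a_n)$ with $\lim_{n\to\mathcal U}\|a_n\|=0$. An algebra is simple if its only two-sided ideals are $\{0\}$ and itself. *)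

(* Defs.v *)
From mathcomp Require Import all_boot all_order all_algebra.
From mathcomp Require Import complex.
From mathcomp Require Import all_classical all_reals all_analysis.
Import numFieldNormedType.Exports.
Import Order.TTheory GRing.Theory Num.Theory.

Set Implicit Arguments.
Unset Strict Implicit.
Unset Printing Implicit Defensive.

Local Open Scope ring_scope.
Local Open Scope classical_set_scope.

Definition banach_algebra_mul (R : realType) (A : completeNormedModType R[i])
    (mul : A -> A -> A) : Prop :=
  [/\ (forall a b c : A, mul a (mul b c) = mul (mul a b) c),
      (forall a b c : A, mul (a + b) c = mul a c + mul b c) /\
      (forall a b c : A, mul a (b + c) = mul a b + mul a c),
      (forall (k : R[i]) (a b : A), mul (k *: a) b = k *: mul a b),
      (forall (k : R[i]) (a b : A), mul a (k *: b) = k *: mul a b)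
    & (forall a b : A, `|mul a b| <= `|a| * `|b|)].

Definition nonprincipal_ultrafilter (U : set_system nat) : Prop :=
  UltraFilter U /\ ~ (exists n : nat, U = principal_filter n).

Definition bounded_seq (R : realType) (A : completeNormedModType R[i])
    (u : nat -> A) : Prop :=
  exists M : R[i], forall n, `|u n| <= M.

Definition null_along (R : realType) (A : completeNormedModType R[i])
    (U : set_system nat) (u : nat -> A) : Prop :=
  forall e : R[i], 0 < e -> U [set n | `|u n| < e].

(* A two-sided ideal of the ultrapower (A)_U = l^oo(A)/c_U(A), represented
   by its preimage J in l^oo(A) under the quotient map: J is a set of bounded
   sequences which is a union of cosets of c_U(A), is a linear subspace, and
   is stable under left and right multiplication by elements of l^oo(A)
   (pointwise product). *)
Definition ultrapower_ideal (R : realType) (A : completeNormedModType R[i])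
    (mul : A -> A -> A) (U : set_system nat) (J : set (nat -> A)) : Prop :=
  [/\ J `<=` bounded_seq (A:=A),
      (forall u v, J u -> bounded_seq v -> null_along U (u - v) -> J v) /\
      J (fun _ => 0),
      (forall u v, J u -> J v -> J (u + v)),
      (forall (k : R[i]) u, J u -> J (fun n => k *: u n))
    & (forall u v, J u -> bounded_seq v ->
         J (fun n => mul (v n) (u n)) /\ J (fun n => mul (u n) (v n)))].

(* (A)_U is simple: its only two-sided ideals are {0} (preimage c_U(A) inside
   l^oo(A)) and the whole ultrapower (preimage l^oo(A)). *)
Definition ultrapower_simple (R : realType) (A : completeNormedModType R[i])
    (mul : A -> A -> A) (U : set_system nat) : Prop :=
  forall J : set (nat -> A), ultrapower_ideal mul U J ->
    J = [set u | bounded_seq u /\ null_along U u] \/ J = bounded_seq (A:=A).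

Definition algebra_hom (R : realType) (A B : completeNormedModType R[i])
    (mulA : A -> A -> A) (mulB : B -> B -> B) (psi : A -> B) : Prop :=
  [/\ (forall a b, psi (a + b) = psi a + psi b),
      (forall (k : R[i]) a, psi (k *: a) = k *: psi a)
    & (forall a b, psi (mulA a b) = mulB (psi a) (psi b))].

(* Main.v *)
Require Import Defs.
From mathcomp Require Import all_boot all_order all_algebra.
From mathcomp Require Import complex.
From mathcomp Require Import all_classical all_reals all_analysis.
From mathcomp Require Import ring.
Import numFieldNormedType.Exports.
Import Order.TTheory GRing.Theory Num.Theory.
Local Open Scope ring_scope.
Local Open Scope classical_set_scope.
Local Open Scope complex_scope.
Lemma cofin_in (U : set_system nat) : nonprincipal_ultrafilter U ->
  forall N, U [set m | (N <= m)%N].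
Proof.
move=> [UU nP]; have PF : ProperFilter U := @ultra_proper _ _ UU.
have FF : Filter U := PF.
elim=> [|N IH].
  by apply: filterS (@filterT _ U _) => m.
have [H|H] := in_ultra_setVsetC [set N] UU.
  exfalso; apply: nP; exists N; rewrite eqEsubset; split=> S.
  - move=> US; apply/principal_filterP.
    by have [m [Sm /= <-]] := @filter_ex _ U PF _ (@filterI _ U FF _ _ US H).
  - move/principal_filterP=> SN; apply: filterS H => m -> //.
apply: filterS (@filterI _ U FF _ _ IH H) => m [Nm /= mN].
by rewrite ltn_neqAle Nm andbT; apply/eqP => E; apply: mN; rewrite E.
Qed.
Lemma cont_bound (R : realType) (A B : completeNormedModType R[i]) (psi : A -> B) :
  (forall a b, psi (a + b) = psi a + psi b) ->
  (forall (k : R[i]) a, psi (k *: a) = k *: psi a) ->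
  continuous psi ->
  exists2 M : R[i], 0 < M & forall x, `|psi x| <= M * `|x|.
Proof.
move=> hD hZ hc.
have p0 : psi 0 = 0 by rewrite -(scale0r (0:A)) hZ scale0r.
have := hc 0 => /cvgrPdist_lt/(_ 1 ltr01); rewrite p0.
move=> /nbhs_ballP[d /= d0 Hd].
exists (2 / d); first by rewrite divr_gt0.
move=> x; have [->|xn0] := eqVneq x 0; first by rewrite p0 !normr0 mulr0.
have nx : 0 < `|x| by rewrite normr_gt0.
set k : R[i] := d / (2 * `|x|).
have k0 : 0 < k by rewrite divr_gt0 // mulr_gt0.
have : ball 0 d (k *: x).
  rewrite -ball_normE /= sub0r normrN normrZ gtr0_norm //.
  rewrite (_ : k * `|x| = d / 2); last by rewrite /k; field; rewrite lt0r_neq0.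
  by rewrite ltr_pdivrMr // ltr_pMr // ltr1n.
move=> /Hd; rewrite sub0r normrN hZ normrZ gtr0_norm // => h.
apply: ltW; rewrite -(ltr_pM2l k0).
rewrite (_ : k * (2 / d * `|x|) = 1) //.
by rewrite /k; field; rewrite !lt0r_neq0.
Qed.

Section Helpers.
Variable (R : realType) (U : set_system nat) (FF : Filter U).

Definition nullR (p : nat -> R[i]) := forall e : R[i], 0 < e -> U [set n | p n < e].

Lemma null_dom (p q : nat -> R[i]) (C : R[i]) : 0 < C ->
  (forall n, q n <= C * p n) -> nullR p -> nullR q.
Proof.
move=> C0 hq hp e e0; apply: filterS (hp (e / C) (divr_gt0 e0 C0)) => n /= h.
apply: le_lt_trans (hq n) _.
by rewrite -ltr_pdivlMl // mulrC.
Qed.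

Lemma null_add (p1 p2 q : nat -> R[i]) :
  (forall n, q n <= p1 n + p2 n) -> nullR p1 -> nullR p2 -> nullR q.
Proof.
move=> hq h1 h2 e e0; have e2 : 0 < e / 2 by rewrite divr_gt0.
apply: filterS (filterI (h1 _ e2) (h2 _ e2)) => n [/= a b].
apply: le_lt_trans (hq n) _.
by rewrite (splitr e) ltrD.
Qed.
End Helpers.
Arguments null_dom {R U FF} [p q C].
Arguments null_add {R U FF} [p1 p2 q].
Arguments nullR {R} U p.

Theorem proposition2p9 (R : realType) (A : completeNormedModType R[i])
    (mulA : A -> A -> A) :
  banach_algebra_mul mulA ->
  (exists U : set_system nat,
      nonprincipal_ultrafilter U /\ ultrapower_simple mulA U) ->
  forall (B : completeNormedModType R[i]) (mulB : B -> B -> B),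
    banach_algebra_mul mulB ->
    forall psi : A -> B,
      algebra_hom mulA mulB psi -> continuous psi ->
      (exists a : A, psi a <> 0) ->
      exists c : R[i], 0 < c /\ forall a : A, c * `|a| <= `|psi a|.
Proof.
move=> [_ _ _ _ nA] [U [nU simp]] B mulB [_ _ _ _ nB] psi [hD hZ hM] hc [a0 pa0].
have PF : ProperFilter U := @ultra_proper _ _ nU.1.
have FF : Filter U := PF.
have [M M0 hMb] := @cont_bound _ _ _ psi hD hZ hc.
have p0 : psi 0 = 0 by rewrite -(scale0r (0:A)) hZ scale0r.
have hB : forall a b, psi (a - b) = psi a - psi b.
  by move=> a b; rewrite hD -scaleN1r hZ scaleN1r.
have bnd0 : forall v : nat -> A, bounded_seq v -> exists2 K : R[i], 0 < K & forall n, `|v n| <= K.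
  move=> v [K hK]; exists (K + 1) => [|n].
    by have K0 := le_trans (normr_ge0 _) (hK 0%N); rewrite ltr_wpDl.
  by apply: le_trans (hK n) _; rewrite lerDl.
pose J := fun u : nat -> A => bounded_seq u /\ nullR U (fun n => `|psi (u n)|).
have hJ : ultrapower_ideal mulA U J.
  split.
  - by move=> u [].
  - split.
    + move=> u v [_ nu] bv nuv; split=> //.
      apply: (null_add (p1 := fun n => `|psi (u n)|) (p2 := fun n => M * `|u n - v n|)).
      * move=> n; rewrite (_ : v n = u n - (u n - v n)); last by rewrite opprB addrC subrK.
        rewrite hB; apply: le_trans (ler_normB _ _) _; rewrite lerD2l.
        rewrite (_ : u n - (u n - (u n - v n)) = u n - v n) ?hMb //.
        by rewrite opprB addrC subrK.
      * exact: nu.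
      * apply: (null_dom (p := fun n => `|u n - v n|) (C := M)) => //.

    + split; first by exists 0 => n; rewrite normr0.
      by move=> e e0; apply: filterS (@filterT _ U _) => n _ /=; rewrite p0 normr0.
  - move=> u v [bu nu] [bv nv]; split.
      have [[Ku Ku0 hu] [Kv Kv0 hv]] := (bnd0 _ bu, bnd0 _ bv).
      by exists (Ku + Kv) => n /=; apply: le_trans (ler_normD _ _) (lerD (hu n) (hv n)).
    apply: (null_add _ nu nv) => n /=; rewrite hD; exact: ler_normD.
  - move=> k u [bu nu]; split.
      have [Ku Ku0 hu] := bnd0 _ bu.
      by exists (`|k| * Ku) => n /=; rewrite normrZ ler_wpM2l.
    apply: (null_dom (C := `|k| + 1) _ _ nu) => [|n /=].
      by rewrite ltr_wpDl.
    by rewrite hZ normrZ ler_wpM2r // lerDl.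
  - move=> u v [bu nu] bv.
    have [[Ku Ku0 hu] [Kv Kv0 hv]] := (bnd0 _ bu, bnd0 _ bv).
    split; split.
    + exists (Kv * Ku) => n /=; apply: le_trans (nA _ _) _.
      by apply: ler_pM => //; rewrite normr_ge0.
    + apply: (null_dom (C := M * Kv) _ _ nu) => [|n /=]; first by rewrite mulr_gt0.
      rewrite hM; apply: le_trans (nB _ _) _; rewrite ler_wpM2r //.
      apply: le_trans (hMb _) _; by rewrite ler_wpM2l // ltW.
    + exists (Ku * Kv) => n /=; apply: le_trans (nA _ _) _.
      by apply: ler_pM => //; rewrite normr_ge0.
    + apply: (null_dom (C := M * Kv) _ _ nu) => [|n /=]; first by rewrite mulr_gt0.
      rewrite hM; apply: le_trans (nB _ _) _; rewrite mulrC ler_wpM2r //.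
      apply: le_trans (hMb _) _; by rewrite ler_wpM2l // ltW.
have setF : forall x : R[i], ~ U [set n | x < x].
  by move=> x Ux; have [n /=] := @filter_ex _ U PF _ Ux; rewrite ltxx.
case: (simp J hJ) => EJ; last first.
  exfalso; have : bounded_seq (fun _ : nat => a0) by exists `|a0|.
  rewrite -EJ => -[_ /(_ `|psi a0|)].
  have : 0 < `|psi a0| by rewrite normr_gt0; apply/eqP.
  by move=> h /(_ h); apply: setF.
apply: contrapT => nC.
pose c (n : nat) : R[i] := ((n.+1%:R)^-1 : R)%:C.
have c0 : forall n, 0 < c n by move=> n; rewrite ltcR invr_gt0 ltr0Sn.
have step : forall n, exists a, `|psi a| < c n * `|a|.
  move=> n; apply: contrapT => h; apply: nC; exists (c n); split=> // a.
  rewrite real_leNgt ?realM ?normr_real ?gtr0_real //; apply/negP => lt.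
  by apply: h; exists a.
have [f hf] := choice step.
have fn0 : forall n, `|f n| != 0.
  move=> n; apply/eqP => E; have := hf n; rewrite E mulr0.
  by move/(le_lt_trans (normr_ge0 _)); rewrite ltxx.
pose b n := `|f n|^-1 *: f n.
have nb : forall n, `|b n| = 1.
  move=> n; rewrite /b normrZ ger0_norm ?invr_ge0 ?normr_ge0 //.
  by rewrite mulVf.
have pb : forall n, `|psi (b n)| < c n.
  move=> n; rewrite /b hZ normrZ ger0_norm ?invr_ge0 ?normr_ge0 //.
  rewrite ltr_pdivrMl ?lt0r ?fn0 ?normr_ge0 // mulrC; exact: hf.
have Jb : J b.
  split; first by exists 1 => n; rewrite nb.
  move=> e e0.
  move: (e0); rewrite ltcE => /andP[/eqP Ie Re0].
  have [N hN] : exists N : nat, c N < e.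
    exists (Num.Def.archi_bound (complex.Re e)^-1).
    rewrite ltcE /= Ie /= eqxx /=.
    rewrite -[complex.Re e]invrK ltf_pV2 ?posrE ?invr_gt0 ?ltr0Sn //.
    apply: lt_le_trans (archi_boundP _) _; first by rewrite invr_ge0 ltW.
    by rewrite invrK ler_nat.
  apply: filterS (@cofin_in U nU N) => n /= Nn.
  apply: lt_trans (pb n) (le_lt_trans _ hN).
  by rewrite lecR lef_pV2 ?posrE ?ltr0Sn // ler_nat.
have : [set u | bounded_seq u /\ null_along U u] b by rewrite -EJ.
move=> [_ /(_ 1 ltr01)] Ub; apply: (setF 1); apply: filterS Ub => n /=.
by rewrite nb.
Qed.
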